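(* Every domain-complete space is convergence Choquet-complete. Every LCS-complete space is compactly Choquet-complete.
   Context: A space is domain-complete (resp. LCS-complete) if it is homeomorphic to a $G_\delta$ subset (countable intersection of open sets), with the subspace topology, of some continuous dcpo with its Scott topology (resp. of some locally compact sober space, locally compact meaning every point has a neighborhood base of compact saturated sets). The strong Choquet game on a space $X$: players $\beta$ and $\alpha$ alternate; at round $n$, $\beta$ picks a point $x_n$ and an open neighborhood $V_n$ of $x_n$ with $V_n\subseteq U_{n-1}$ (when $n\ge1$), and then $\alpha$ picks an open set $U_n$ with $x_n\in U_n\subseteq V_n$; $\alpha$'s strategies may depend on the entire history of the play. $X$ is Choquet-complete if $\alpha$ has a strategy ensuring $\bigcap_n U_n\neq\emptyset$; convergence Choquet-complete if $\alpha$ has a strategy ensuring that $(U_n)_{n\in\mathbb N}$ is a base of open neighborhoods of some point; compactly Choquet-complete if $\alpha$ has a strategy ensuring that $(U_n)_{n\in\mathbb N}$ is a base of open neighborhoods of some non-empty compact saturated set (i.e. every open set containing that set contains some $U_n$, and the set is contained in every $U_n$). *)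

(* Defs.v *)
From Stdlib Require Import List.
Import ListNotations.
Set Implicit Arguments.

Definition subset {X : Type} (A B : X -> Prop) : Prop := forall x, A x -> B x.

Definition is_topology (X : Type) (O : (X -> Prop) -> Prop) : Prop :=
  O (fun _ => True) /\
  (forall U V, O U -> O V -> O (fun x => U x /\ V x)) /\
  (forall F : (X -> Prop) -> Prop, (forall U, F U -> O U) ->
     O (fun x => exists U, F U /\ U x)).

Definition is_closed {X : Type} (O : (X -> Prop) -> Prop) (C : X -> Prop) : Prop :=
  O (fun x => ~ C x).

Definition subspace_open {Y : Type} (O : (Y -> Prop) -> Prop) (G : Y -> Prop)
  (S : {y : Y | G y} -> Prop) : Prop :=
  exists V, O V /\ forall z, S z <-> V (proj1_sig z).

Definition continuous {X Y : Type} (OX : (X -> Prop) -> Prop) (OY : (Y -> Prop) -> Prop)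
  (f : X -> Y) : Prop :=
  forall V, OY V -> OX (fun x => V (f x)).

Definition homeomorphic {X Y : Type} (OX : (X -> Prop) -> Prop) (OY : (Y -> Prop) -> Prop) : Prop :=
  exists (f : X -> Y) (g : Y -> X),
    (forall x, g (f x) = x) /\ (forall y, f (g y) = y) /\
    continuous OX OY f /\ continuous OY OX g.

Definition G_delta {Y : Type} (O : (Y -> Prop) -> Prop) (G : Y -> Prop) : Prop :=
  exists W : nat -> Y -> Prop, (forall n, O (W n)) /\ (forall y, G y <-> forall n, W n y).

Definition is_partial_order {D : Type} (le : D -> D -> Prop) : Prop :=
  (forall x, le x x) /\ (forall x y z, le x y -> le y z -> le x z) /\
  (forall x y, le x y -> le y x -> x = y).

Definition directed {D : Type} (le : D -> D -> Prop) (S : D -> Prop) : Prop :=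
  (exists d, S d) /\ (forall a b, S a -> S b -> exists c, S c /\ le a c /\ le b c).

Definition is_sup {D : Type} (le : D -> D -> Prop) (S : D -> Prop) (s : D) : Prop :=
  (forall d, S d -> le d s) /\ (forall u, (forall d, S d -> le d u) -> le s u).

Definition is_dcpo {D : Type} (le : D -> D -> Prop) : Prop :=
  is_partial_order le /\ forall S, directed le S -> exists s, is_sup le S s.

Definition way_below {D : Type} (le : D -> D -> Prop) (x y : D) : Prop :=
  forall S s, directed le S -> is_sup le S s -> le y s -> exists d, S d /\ le x d.

Definition is_continuous_dcpo {D : Type} (le : D -> D -> Prop) : Prop :=
  is_dcpo le /\
  forall x, directed le (fun y => way_below le y x) /\ is_sup le (fun y => way_below le y x) x.

Definition scott_open {D : Type} (le : D -> D -> Prop) (U : D -> Prop) : Prop :=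
  (forall x y, U x -> le x y -> U y) /\
  (forall S s, directed le S -> is_sup le S s -> U s -> exists d, S d /\ U d).

Definition point_closure {X : Type} (O : (X -> Prop) -> Prop) (x : X) (y : X) : Prop :=
  forall U, O U -> U y -> U x.

Definition irreducible_closed {X : Type} (O : (X -> Prop) -> Prop) (C : X -> Prop) : Prop :=
  is_closed O C /\ (exists x, C x) /\
  forall F1 F2, is_closed O F1 -> is_closed O F2 ->
    subset C (fun x => F1 x \/ F2 x) -> subset C F1 \/ subset C F2.

Definition sober {X : Type} (O : (X -> Prop) -> Prop) : Prop :=
  forall C, irreducible_closed O C ->
    exists! x, forall y, C y <-> point_closure O x y.

Definition compact {X : Type} (O : (X -> Prop) -> Prop) (K : X -> Prop) : Prop :=
  forall F : (X -> Prop) -> Prop,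
    (forall U, F U -> O U) -> subset K (fun x => exists U, F U /\ U x) ->
    exists l : list (X -> Prop), (forall U, In U l -> F U) /\
      subset K (fun x => exists U, In U l /\ U x).

Definition saturated {X : Type} (O : (X -> Prop) -> Prop) (Q : X -> Prop) : Prop :=
  forall x, (forall U, O U -> subset Q U -> U x) -> Q x.

Definition locally_compact {X : Type} (O : (X -> Prop) -> Prop) : Prop :=
  forall x U, O U -> U x ->
    exists Q V, compact O Q /\ saturated O Q /\ O V /\ V x /\ subset V Q /\ subset Q U.

Definition domain_complete (X : Type) (O : (X -> Prop) -> Prop) : Prop :=
  exists (D : Type) (le : D -> D -> Prop) (G : D -> Prop),
    is_continuous_dcpo le /\ G_delta (scott_open le) G /\
    homeomorphic O (subspace_open (scott_open le) G).

Definition LCS_complete (X : Type) (O : (X -> Prop) -> Prop) : Prop :=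
  exists (Y : Type) (OY : (Y -> Prop) -> Prop) (G : Y -> Prop),
    is_topology OY /\ sober OY /\ locally_compact OY /\ G_delta OY G /\
    homeomorphic O (subspace_open OY G).

(* A strategy for alpha maps the history of beta's moves (x_0,V_0),...,(x_n,V_n)
   (oldest first; alpha's earlier moves are determined by the strategy itself)
   to alpha's answer U_n. *)
Definition strategy (X : Type) := list (X * (X -> Prop)) -> (X -> Prop).

Definition beta_history {X : Type} (x : nat -> X) (V : nat -> X -> Prop) (n : nat)
  : list (X * (X -> Prop)) :=
  map (fun i => (x i, V i)) (seq 0 (S n)).

Definition alpha_move {X : Type} (s : strategy X) (x : nat -> X) (V : nat -> X -> Prop)
  (n : nat) : X -> Prop := s (beta_history x V n).

Definition beta_legal_at {X : Type} (O : (X -> Prop) -> Prop) (s : strategy X)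
  (x : nat -> X) (V : nat -> X -> Prop) (k : nat) : Prop :=
  O (V k) /\ V k (x k) /\ (forall m, k = S m -> subset (V k) (alpha_move s x V m)).

Definition winning_strategy {X : Type} (O : (X -> Prop) -> Prop)
  (W : (nat -> X -> Prop) -> Prop) (s : strategy X) : Prop :=
  (forall x V n, (forall k, k <= n -> beta_legal_at O s x V k) ->
     O (alpha_move s x V n) /\ alpha_move s x V n (x n) /\
     subset (alpha_move s x V n) (V n)) /\
  (forall x V, (forall k, beta_legal_at O s x V k) -> W (alpha_move s x V)).

Definition choquet_complete (X : Type) (O : (X -> Prop) -> Prop) : Prop :=
  exists s, winning_strategy O (fun U => exists y, forall n, U n y) s.

Definition convergence_choquet_complete (X : Type) (O : (X -> Prop) -> Prop) : Prop :=
  exists s, winning_strategy O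
    (fun U => exists y, (forall n, U n y) /\
       (forall W, O W -> W y -> exists n, subset (U n) W)) s.

Definition compactly_choquet_complete (X : Type) (O : (X -> Prop) -> Prop) : Prop :=
  exists s, winning_strategy O
    (fun U => exists Q, (exists y, Q y) /\ compact O Q /\ saturated O Q /\
       (forall n, subset Q (U n)) /\
       (forall W, O W -> subset Q W -> exists n, subset (U n) W)) s.

(* Main.v *)
Require Import Defs.
From mathcomp Require classical_sets.
From Stdlib Require Import List Arith Lia Classical ClassicalEpsilon FunctionalExtensionality PropExtensionality.
Import ListNotations.

Fixpoint go {X St : Type} (step : nat -> option St -> X * (X -> Prop) -> St)
  (prev : option St) (k : nat) (h : list (X * (X -> Prop))) : option St :=
  match h with [] => prev | p :: t => go step (Some (step k prev p)) (S k) t end.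

Definition mkstrat {X St : Type} (step : nat -> option St -> X * (X -> Prop) -> St)
  (out : St -> X -> Prop) : strategy X :=
  fun h => match go step None 0 h with Some st => out st | None => fun _ => True end.

Fixpoint stn {X St : Type} (step : nat -> option St -> X * (X -> Prop) -> St)
  (x : nat -> X) (V : nat -> X -> Prop) (n : nat) : St :=
  match n with
  | 0 => step 0 None (x 0, V 0)
  | S m => step (S m) (Some (stn step x V m)) (x (S m), V (S m))
  end.

Definition prevopt {X St : Type} (step : nat -> option St -> X * (X -> Prop) -> St)
  (x : nat -> X) (V : nat -> X -> Prop) (n : nat) : option St :=
  match n with 0 => None | S m => Some (stn step x V m) end.

Lemma stn_eq {X St : Type} step (x : nat -> X) V n :
  @stn X St step x V n = step n (prevopt step x V n) (x n, V n).
Proof. destruct n; reflexivity. Qed.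

Lemma go_app {X St : Type} step l : forall (prev : option St) k (p : X * (X -> Prop)),
  go step prev k (l ++ [p]) = Some (step (k + length l) (go step prev k l) p).
Proof.
  induction l as [|a l IH]; intros prev k p; simpl.
  - rewrite Nat.add_0_r; reflexivity.
  - rewrite IH. f_equal. f_equal. lia.
Qed.

Lemma state_hist {X St : Type} step (x : nat -> X) V n :
  go step None 0 (beta_history x V n) = Some (@stn X St step x V n).
Proof.
  induction n as [|n IH].
  - reflexivity.
  - unfold beta_history. rewrite seq_S. rewrite map_app. simpl map at 2.
    rewrite go_app. fold (beta_history x V n). rewrite IH.
    unfold beta_history. rewrite length_map, length_seq. simpl. reflexivity.
Qed.

Lemma alpha_mk {X St : Type} step out (x : nat -> X) V n :
  alpha_move (mkstrat step out) x V n = out (@stn X St step x V n).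
Proof. unfold alpha_move, mkstrat. rewrite state_hist. reflexivity. Qed.

Lemma open_ext {Y : Type} (OY : (Y -> Prop) -> Prop) U V :
  OY U -> (forall x, U x <-> V x) -> OY V.
Proof.
  intros HU H. replace V with U; auto.
  apply functional_extensionality; intro x; apply propositional_extensionality; auto.
Qed.
Lemma zorn_wrap (T : Type) (P : (T->Prop)->Prop) :
  (forall F : (T -> Prop) -> Prop, (forall A, F A -> P A) ->
     (forall A B, F A -> F B -> (forall t, A t -> B t) \/ (forall t, B t -> A t)) ->
     P (fun t => exists A, F A /\ A t)) ->
  exists A, P A /\ forall B, (forall t, A t -> B t) -> ~ (forall t, B t -> A t) -> ~ P B.
Proof.
  intros H.
  assert (Hz : forall F : classical_sets.set (classical_sets.set T),
     classical_sets.subset F P -> classical_sets.total_on F classical_sets.subset ->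
     P (classical_sets.bigcup F (fun X => X))).
  { intros F HF Htot. 
    assert (E : classical_sets.bigcup F (fun X => X) = (fun t => exists A, F A /\ A t)).
    { apply boolp.funext; intro t; apply boolp.propext; split;
      [intros [A h1 h2] | intros [A [h1 h2]]]; exists A; try split; auto. }
    rewrite E. apply H. { intros A0 HA0; apply HF; exact HA0. }
    intros A0 B FA FB. destruct (Htot A0 B FA FB); auto. }
  destruct (@classical_sets.Zorn_bigcup T P Hz) as [A [HA HB]].
  exists A; split; auto. intros B h1 h2. apply HB. split; auto.
Qed.

Lemma wb_le {D : Type} (le : D -> D -> Prop) : is_partial_order le ->
  forall a b, way_below le a b -> le a b.
Proof.
  intros [Hr [Ht Ha]] a b H.
  destruct (H (fun d => d = b) b) as [d [Hd Hd']].
  - split. exists b; auto. intros a0 b0 -> ->. exists b; auto.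
  - split. intros d ->; apply Hr. intros u Hu; apply Hu; auto.
  - apply Hr.
  - subst; auto.
Qed.

Lemma wb_up {D : Type} (le : D -> D -> Prop) : is_partial_order le ->
  forall a b c, way_below le a b -> le b c -> way_below le a c.
Proof.
  intros [Hr [Ht Ha]] a b c H Hbc S s HS Hs Hcs. apply (H S s HS Hs). eauto.
Qed.

Lemma le_wb {D : Type} (le : D -> D -> Prop) : is_partial_order le ->
  forall a b c, le a b -> way_below le b c -> way_below le a c.
Proof.
  intros [Hr [Ht Ha]] a b c Hab H S s HS Hs Hcs.
  destruct (H S s HS Hs Hcs) as [d [Hd Hbd]]. exists d; split; eauto.
Qed.

Lemma scott_up {D : Type} (le : D -> D -> Prop) A x y :
  scott_open le A -> A x -> le x y -> A y.
Proof. intros [H _] Ax Hxy; eauto. Qed.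

Lemma scott_inter {D : Type} (le : D -> D -> Prop) : is_partial_order le ->
  forall A B, scott_open le A -> scott_open le B -> scott_open le (fun x => A x /\ B x).
Proof.
  intros [Hr [Ht Ha]] A B [HA1 HA2] [HB1 HB2]. split.
  - intros x y [h1 h2] h; split; eauto.
  - intros S s HS Hs [h1 h2].
    destruct (HA2 S s HS Hs h1) as [d1 [S1 A1]].
    destruct (HB2 S s HS Hs h2) as [d2 [S2 B2]].
    destruct HS as [_ HS]. destruct (HS d1 d2 S1 S2) as [c [Sc [l1 l2]]].
    exists c; split; [|split]; eauto.
Qed.

Lemma scott_dense {D : Type} (le : D -> D -> Prop) : is_continuous_dcpo le ->
  forall A z, scott_open le A -> A z -> exists d, way_below le d z /\ A d.
Proof.
  intros [_ Hc] A z [_ HA] Az. destruct (Hc z) as [Hd Hs].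
  destruct (HA _ _ Hd Hs Az) as [d [h1 h2]]. eauto.
Qed.

Lemma scott_open_wb {D : Type} (le : D -> D -> Prop) : is_continuous_dcpo le ->
  forall y, scott_open le (way_below le y).
Proof.
  intros Hcd y. pose proof Hcd as [[Hpo _] Hc]. pose proof Hpo as [Hr [Ht Ha]].
  split.
  - intros a b H1 H2. eapply wb_up; eauto.
  - intros S s HS Hs Hys.
    set (T := fun e => exists d, S d /\ way_below le e d).
    assert (HT : directed le T).
    { destruct HS as [[d0 Sd0] HS]. split.
      - destruct (Hc d0) as [[[e He] _] _]. exists e. exists d0; auto.
      - intros e1 e2 [d1 [S1 W1]] [d2 [S2 W2]].
        destruct (HS d1 d2 S1 S2) as [c [Sc [l1 l2]]].
        assert (W1' : way_below le e1 c) by (eapply wb_up; eauto).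
        assert (W2' : way_below le e2 c) by (eapply wb_up; eauto).
        destruct (Hc c) as [[_ Hdir] _].
        destruct (Hdir e1 e2 W1' W2') as [e [We [m1 m2]]].
        exists e; split; auto. exists c; auto. }
    assert (HTs : is_sup le T s).
    { split.
      - intros e [d [Sd We]]. apply Ht with d. eapply wb_le; eauto. apply Hs; auto.
      - intros u Hu. apply Hs. intros d Sd. destruct (Hc d) as [_ [_ Hsd]].
        apply Hsd. intros e We. apply Hu. exists d; auto. }
    destruct (Hys T s HT HTs (Hr s)) as [e [[d [Sd We]] Hye]].
    exists d; split; auto. eapply le_wb; eauto.
Qed.

Lemma open_pull {X Y : Type} (O : (X -> Prop) -> Prop) (OY : (Y -> Prop) -> Prop) (G : Y -> Prop)
  (f : X -> {y | G y}) : continuous O (subspace_open OY G) f ->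
  forall V', OY V' -> O (fun x => V' (proj1_sig (f x))).
Proof.
  intros cf V' HV. apply (cf (fun z => V' (proj1_sig z))). exists V'; split; auto. tauto.
Qed.

Lemma open_push {X Y : Type} (O : (X -> Prop) -> Prop) (OY : (Y -> Prop) -> Prop) (G : Y -> Prop)
  (g : {y | G y} -> X) : continuous (subspace_open OY G) O g ->
  forall U, O U -> exists V', OY V' /\ forall z, U (g z) <-> V' (proj1_sig z).
Proof. intros cg U HU. apply (cg U HU). Qed.

Lemma list_choice {A B : Type} (F : A -> Prop) (R : A -> B -> Prop) (l' : list B) :
  (forall b, In b l' -> exists a, F a /\ R a b) ->
  exists l, (forall a, In a l -> F a) /\ (forall b, In b l' -> exists a, In a l /\ R a b).
Proof.
  induction l' as [|b l' IH]; intros H.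
  - exists []; simpl; split; intros; contradiction.
  - destruct (H b (or_introl eq_refl)) as [a [Fa Ra]].
    destruct IH as [l [h1 h2]]. { intros; apply H; simpl; auto. }
    exists (a :: l); split.
    + intros a0 [<-|h]; auto.
    + intros b0 [<-|h].
      * exists a; simpl; auto.
      * destruct (h2 b0 h) as [a1 [i1 r1]]. exists a1; simpl; auto.
Qed.

Lemma compact_transfer {X Y : Type} (O : (X -> Prop) -> Prop) (OY : (Y -> Prop) -> Prop) (G : Y -> Prop)
  (f : X -> {y | G y}) (g : {y | G y} -> X) :
  (forall x, g (f x) = x) -> (forall y, f (g y) = y) ->
  continuous (subspace_open OY G) O g ->
  forall Qy, compact OY Qy -> (forall y, Qy y -> G y) ->
  compact O (fun x => Qy (proj1_sig (f x))).
Proof.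
  intros gf fg cg Qy HQ HQG F HF Hcov.
  set (R := fun U V' => forall z : {y | G y}, U (g z) <-> V' (proj1_sig z)).
  set (F' := fun V' => OY V' /\ exists U, F U /\ R U V').
  destruct (HQ F') as [l' [h1 h2]].
  - intros V' [h _]; auto.
  - intros y Qyy. set (z := exist G y (HQG y Qyy)).
    assert (Kx : Qy (proj1_sig (f (g z)))) by (rewrite fg; exact Qyy).
    destruct (Hcov _ Kx) as [U [FU Ux]].
    destruct (open_push O OY G g cg U (HF U FU)) as [V' [OV' HV']].
    exists V'; split. { split; auto. exists U; split; auto. }
    apply (HV' z); auto.
  - destruct (list_choice F R l') as [l [k1 k2]].
    { intros b Hb. destruct (h1 b Hb) as [_ [a [Fa Ra]]]. eauto. }
    exists l; split; auto.
    intros x Kx. destruct (h2 _ Kx) as [V' [iV' V'x]].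
    destruct (k2 V' iV') as [U [iU RU]]. exists U; split; auto.
    rewrite <- (gf x). apply (RU (f x)); auto.
Qed.

Lemma saturated_transfer {X Y : Type} (O : (X -> Prop) -> Prop) (OY : (Y -> Prop) -> Prop) (G : Y -> Prop)
  (f : X -> {y | G y}) :
  continuous O (subspace_open OY G) f ->
  forall Qy, saturated OY Qy -> saturated O (fun x => Qy (proj1_sig (f x))).
Proof.
  intros cf Qy HS x Hx. apply HS. intros V' OV' sub.
  apply (Hx (fun x => V' (proj1_sig (f x)))).
  - apply (open_pull O OY G f); auto.
  - intros x0 h; apply sub; auto.
Qed.

Lemma top_union2 {Y : Type} (OY : (Y -> Prop) -> Prop) : is_topology OY ->
  forall A B, OY A -> OY B -> OY (fun y => A y \/ B y).
Proof.
  intros [_ [_ Hu]] A B HA HB.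
  apply open_ext with (fun y => exists U, (U = A \/ U = B) /\ U y).
  - apply Hu. intros U [->| ->]; auto.
  - intro y; split.
    + intros [U [[->| ->] h]]; auto.
    + intros [h|h]; eauto.
Qed.

Lemma well_filtered {Y : Type} (OY : (Y -> Prop) -> Prop) :
  is_topology OY -> sober OY ->
  forall Q : nat -> Y -> Prop, (forall n, compact OY (Q n)) -> (forall n, saturated OY (Q n)) ->
  (forall n m, n <= m -> subset (Q m) (Q n)) ->
  forall W, OY W -> (forall y, (forall n, Q n y) -> W y) -> exists n, subset (Q n) W.
Proof.
  intros Htop Hsob Q HQc HQs HQd W OW HW.
  pose proof Htop as [HT [Hi Hu]].
  apply NNPP; intro Hno.
  set (P := fun A => OY A /\ forall n, ~ subset (Q n) (fun y => A y \/ W y)).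
  destruct (zorn_wrap Y P) as [A [[OA HA] Hmax]].
  - intros F HF Htot. split.
    + apply Hu. intros U FU; apply HF; auto.
    + intros n Hsub.
      set (F' := fun B => F B \/ B = W).
      destruct (HQc n F') as [l [hl1 hl2]].
      * intros U [FU| ->]; auto. apply HF; auto.
      * intros y Qy. destruct (Hsub y Qy) as [[U [FU Uy]]|Wy].
        exists U; split; auto. left; auto. exists W; split; auto. right; auto.
      * assert (Key : forall l : list (Y -> Prop), (forall B, In B l -> F' B) ->
          (forall y, (exists B, In B l /\ B y) -> W y) \/
          exists A0, F A0 /\ forall y, (exists B, In B l /\ B y) -> A0 y \/ W y).
        { induction l0 as [|B l0 IH]; intros Hl.
          - left. intros y [B [[] _]].
          - destruct IH as [IH|[A0 [FA0 IH]]]. { intros; apply Hl; simpl; auto. }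
            + destruct (Hl B (or_introl eq_refl)) as [FB| ->].
              * right. exists B; split; auto. intros y [B' [[<-|iB'] B'y]]; auto.
                right; apply IH; eauto.
              * left. intros y [B' [[<-|iB'] B'y]]; auto. apply IH; eauto.
            + destruct (Hl B (or_introl eq_refl)) as [FB| ->].
              * destruct (Htot A0 B FA0 FB) as [s|s].
                -- right. exists B; split; auto. intros y [B' [[<-|iB'] B'y]]; auto.
                   destruct (IH y) as [h|h]; eauto.
                -- right. exists A0; split; auto. intros y [B' [[<-|iB'] B'y]]; auto.
                   apply IH; eauto.
              * right. exists A0; split; auto. intros y [B' [[<-|iB'] B'y]]; auto.
                apply IH; eauto. }
        destruct (Key l hl1) as [K|[A0 [FA0 K]]].
        -- apply Hno. exists n. intros y Qy; apply K; auto.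
        -- destruct (HF A0 FA0) as [_ HA0]. apply (HA0 n). intros y Qy; apply K; auto.
  -
    assert (HWA : forall y, W y -> A y).
    { apply NNPP; intro Hn.
      apply (Hmax (fun y => A y \/ W y)).
      + intros; auto.
      + intro Hs. apply Hn. intros y Wy. apply Hs; auto.
      + split. apply top_union2; auto.
        intros n Hs. apply (HA n). intros y Qy. destruct (Hs y Qy) as [[h|h]|h]; auto. }
    set (C := fun y => ~ A y).
    assert (Hirr : irreducible_closed OY C).
    { split; [|split].
      - unfold is_closed. apply open_ext with A; auto. intro x; unfold C; split; [tauto|apply NNPP].
      - apply NNPP; intro Hne. apply (HA 0). intros y _. left. apply NNPP; intro h.
        apply Hne; exists y; auto.
      - intros F1 F2 HF1 HF2 Hsub. apply NNPP; intro Hn.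
        apply not_or_and in Hn as [n1 n2].
        assert (Hb : forall F, is_closed OY F -> ~ subset C F ->
          exists n, subset (Q n) (fun y => (A y \/ ~ F y) \/ W y)).
        { intros F HF HnF. apply NNPP; intro Hk.
          apply (Hmax (fun y => A y \/ ~ F y)).
          - intros; auto.
          - intro Hs. apply HnF. intros y Cy. apply NNPP; intro nF.
            apply Cy. apply Hs; right; exact nF.
          - split. apply top_union2; auto.
            intros n Hs. apply Hk. exists n; auto. }
        destruct (Hb F1 HF1 n1) as [k1 K1]. destruct (Hb F2 HF2 n2) as [k2 K2].
        apply (HA (max k1 k2)). intros y Qy.
        destruct (K1 y (HQd k1 _ (Nat.le_max_l _ _) y Qy)) as [[h|h]|h]; auto.
        destruct (K2 y (HQd k2 _ (Nat.le_max_r _ _) y Qy)) as [[h'|h']|h']; auto.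
        destruct (classic (A y)) as [a|na]; auto.
        destruct (Hsub y na); contradiction. }
    destruct (Hsob C Hirr) as [x [Hx _]].
    assert (Cx : C x) by (apply Hx; intros U _ h; exact h).
    apply Cx. apply HWA. apply HW. intro n. apply HQs. intros U OU sub.
    assert (Hex : exists y, Q n y /\ ~ A y).
    { apply NNPP; intro h. apply (HA n). intros y Qy. left. apply NNPP; intro na.
      apply h; eauto. }
    destruct Hex as [y [Qy nAy]].
    apply (proj1 (Hx y) nAy U OU). apply sub; auto.
Qed.

Lemma part1 (X : Type) (O : (X -> Prop) -> Prop) :
  domain_complete O -> convergence_choquet_complete O.
Proof.
  intros [D [le [G [Hcd [[Wd [HWo HWG]] [f [g [gf [fg [cf cg]]]]]]]]]].
  pose proof Hcd as [[Hpo _] _]. pose proof Hpo as [Hr [Ht Ha]].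
  set (p := fun x => proj1_sig (f x)).
  set (P1 := fun (k : nat) (prev : option D) (xk : X) (Vk : X -> Prop) (y : D) =>
    way_below le y (p xk) /\ Wd k y /\ (forall x, le y (p x) -> Vk x) /\
    match prev with Some y' => way_below le y' y | None => True end).
  set (step := fun k prev (xv : X * (X -> Prop)) =>
    epsilon (inhabits (p (fst xv))) (P1 k prev (fst xv) (snd xv))).
  set (out := fun (y : D) (x : X) => way_below le y (p x)).
  exists (mkstrat step out).
  assert (Hst : forall x V n, beta_legal_at O (mkstrat step out) x V n ->
     P1 n (prevopt step x V n) (x n) (V n) (stn step x V n)).
  { intros x V n [OV [Vx Hsub]]. rewrite stn_eq. unfold step at 1; simpl.
    apply epsilon_spec.
    destruct (open_push O (scott_open le) G g cg (V n) OV) as [V' [OV' HV']].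
    set (A := fun y => (V' y /\ Wd n y) /\
       match prevopt step x V n with Some y' => way_below le y' y | None => True end).
    assert (OA : scott_open le A).
    { apply scott_inter; auto. apply scott_inter; auto.
      destruct (prevopt step x V n). apply scott_open_wb; auto.
      split. auto. intros S s [[d Sd] _] _ _. exists d; auto. }
    assert (Az : A (p (x n))).
    { split; [split|].
      - apply (HV' (f (x n))). rewrite gf; auto.
      - apply HWG. exact (proj2_sig (f (x n))).
      - destruct n as [|m]; simpl; auto.
        specialize (Hsub m eq_refl (x (S m)) Vx). rewrite alpha_mk in Hsub. exact Hsub. }
    destruct (scott_dense le Hcd A _ OA Az) as [d [Wdz [[V'd Wd_] Hprev]]].
    exists d. split; [exact Wdz|split; [exact Wd_|split; [|exact Hprev]]].
    intros x0 Hle. rewrite <- (gf x0). apply (HV' (f x0)).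
    destruct OA as [_ _]. apply (scott_up le V' d); auto. }
  split.
  - intros x V n Hleg. rewrite alpha_mk.
    destruct (Hst x V n (Hleg n (le_n n))) as [h1 [h2 [h3 h4]]].
    split; [|split].
    + apply (open_pull O (scott_open le) G f cf (way_below le (stn step x V n))).
      apply scott_open_wb; auto.
    + exact h1.
    + intros x0 H0. apply h3. apply (wb_le le Hpo); exact H0.
  - intros x V Hleg.
    set (y := stn step x V).
    assert (HP : forall n, P1 n (prevopt step x V n) (x n) (V n) (y n)) by (intro n; apply Hst; auto).
    assert (Hch : forall n, way_below le (y n) (y (S n))).
    { intro n. destruct (HP (S n)) as [_ [_ [_ h]]]. exact h. }
    assert (Hmono : forall n m, n <= m -> le (y n) (y m)).
    { intros n m Hnm. induction Hnm. apply Hr. apply Ht with (y m); auto.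
      apply (wb_le le Hpo); auto. }
    set (T := fun d => exists n, d = y n).
    assert (HT : directed le T).
    { split. exists (y 0); exists 0; auto.
      intros a b [n ->] [m ->]. exists (y (max n m)). split. exists (max n m); auto.
      split; apply Hmono; lia. }
    destruct Hcd as [[_ Hdcpo] _].
    destruct (Hdcpo T HT) as [s Hs].
    assert (Gs : G s).
    { apply HWG. intro k. destruct (HP k) as [_ [h _]].
      apply (scott_up le (Wd k) (y k)); auto. apply Hs. exists k; auto. }
    set (xs := g (exist G s Gs)).
    assert (pxs : p xs = s). { unfold p, xs. rewrite fg. reflexivity. }
    exists xs. split.
    + intro n. rewrite alpha_mk. unfold out. rewrite pxs.
      apply (wb_up le Hpo) with (y (S n)); auto. apply Hs. exists (S n); auto.
    + intros W' OW' W'x.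
      destruct (open_push O (scott_open le) G g cg W' OW') as [V'' [OV'' HV'']].
      assert (V''s : V'' s) by (apply (HV'' (exist G s Gs)); exact W'x).
      destruct OV'' as [Hup Hin].
      destruct (Hin T s HT Hs V''s) as [d [[n ->] V''d]].
      exists n. intros x0 H0. rewrite alpha_mk in H0. unfold out in H0.
      rewrite <- (gf x0). apply (HV'' (f x0)). apply Hup with (y n); auto.
      apply (wb_le le Hpo); exact H0.
Qed.

Lemma part2 (X : Type) (O : (X -> Prop) -> Prop) :
  LCS_complete O -> compactly_choquet_complete O.
Proof.
  intros [Y [OY [G [Htop [Hsob [Hlc [[Wd [HWo HWG]] [f [g [gf [fg [cf cg]]]]]]]]]]]].
  pose proof Htop as [HT [Hi Hu]].
  set (p := fun x => proj1_sig (f x)).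
  set (P2 := fun (k : nat) (prev : option ((Y -> Prop) * (Y -> Prop))) (xk : X) (Vk : X -> Prop)
     (QI : (Y -> Prop) * (Y -> Prop)) =>
    compact OY (fst QI) /\ saturated OY (fst QI) /\ OY (snd QI) /\ snd QI (p xk) /\
    subset (snd QI) (fst QI) /\ subset (fst QI) (Wd k) /\ (forall x, fst QI (p x) -> Vk x) /\
    match prev with Some QI' => subset (fst QI) (snd QI') | None => True end).
  set (step := fun k prev (xv : X * (X -> Prop)) =>
    epsilon (inhabits ((fun _ : Y => True), (fun _ : Y => True))) (P2 k prev (fst xv) (snd xv))).
  set (out := fun (QI : (Y -> Prop) * (Y -> Prop)) (x : X) => snd QI (p x)).
  exists (mkstrat step out).
  assert (Hst : forall x V n, (forall k, k <= n -> beta_legal_at O (mkstrat step out) x V k) ->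
     P2 n (prevopt step x V n) (x n) (V n) (stn step x V n)).
  { intros x V n. induction n as [|m IH]; intros Hleg.
    all: destruct (Hleg _ (le_n _)) as [OV [Vx Hsub]].
    all: rewrite stn_eq; unfold step at 1; simpl; apply epsilon_spec.
    all: destruct (open_push O OY G g cg (V _) OV) as [V' [OV' HV']].
    - destruct (Hlc (p (x 0)) (fun y => V' y /\ Wd 0 y)) as [Q [I [h1 [h2 [h3 [h4 [h5 h6]]]]]]].
      + apply Hi; auto.
      + split. apply (HV' (f (x 0))). rewrite gf; auto. apply HWG. exact (proj2_sig (f (x 0))).
      + exists (Q, I); simpl. repeat split; auto.
        * intros y Qy; apply (h6 y Qy).
        * intros x0 Qx0. rewrite <- (gf x0). apply (HV' (f x0)). apply (h6 _ Qx0).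
    - assert (IHm : P2 m (prevopt step x V m) (x m) (V m) (stn step x V m)).
      { apply IH. intros k Hk; apply Hleg; lia. }
      destruct IHm as [_ [_ [OI' _]]].
      destruct (Hlc (p (x (S m))) (fun y => (V' y /\ Wd (S m) y) /\ snd (stn step x V m) y))
        as [Q [I [h1 [h2 [h3 [h4 [h5 h6]]]]]]].
      + apply Hi; auto.
      + split; [split|].
        * apply (HV' (f (x (S m)))). rewrite gf; auto.
        * apply HWG. exact (proj2_sig (f (x (S m)))).
        * specialize (Hsub m eq_refl (x (S m)) Vx). rewrite alpha_mk in Hsub. exact Hsub.
      + exists (Q, I); simpl. repeat split; auto.
        * intros y Qy; apply (h6 y Qy).
        * intros x0 Qx0. rewrite <- (gf x0). apply (HV' (f x0)). apply (h6 _ Qx0).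
        * intros y Qy; apply (h6 y Qy). }
  split.
  - intros x V n Hleg. rewrite alpha_mk.
    destruct (Hst x V n Hleg) as [_ [_ [h3 [h4 [h5 [_ [h7 _]]]]]]].
    split; [|split].
    + apply (open_pull O OY G f cf); auto.
    + exact h4.
    + intros x0 H0. apply h7. apply h5. exact H0.
  - intros x V Hleg.
    assert (HP : forall n, P2 n (prevopt step x V n) (x n) (V n) (stn step x V n))
      by (intro n; apply Hst; auto).
    set (Qn := fun n => fst (stn step x V n)).
    set (In := fun n => snd (stn step x V n)).
    assert (HQc : forall n, compact OY (Qn n)) by (intro n; apply (HP n)).
    assert (HQs : forall n, saturated OY (Qn n)) by (intro n; apply (HP n)).
    assert (HIQ : forall n, subset (In n) (Qn n)) by (intro n; apply (HP n)).
    assert (HQI : forall n, subset (Qn (S n)) (In n)).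
    { intro n. destruct (HP (S n)) as [_ [_ [_ [_ [_ [_ [_ h]]]]]]]. exact h. }
    assert (HQd : forall n m, n <= m -> subset (Qn m) (Qn n)).
    { intros n m Hnm. induction Hnm. intros y h; exact h.
      intros y h. apply IHHnm. apply HIQ. apply HQI. exact h. }
    set (Qinf := fun y => forall n, Qn n y).
    assert (HQG : forall y, Qinf y -> G y).
    { intros y Hy. apply HWG. intro k. destruct (HP k) as [_ [_ [_ [_ [_ [h _]]]]]].
      apply h. apply Hy. }
    assert (WF := well_filtered OY Htop Hsob Qn HQc HQs HQd).
    assert (Qne : exists y, Qinf y).
    { apply NNPP; intro Hne.
      destruct (WF (fun y => exists U, (fun _ : Y -> Prop => False) U /\ U y)) as [n Hn].
      - apply Hu. intros _ [].
      - intros y Hy. exfalso. apply Hne; eauto.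
      - destruct (HP n) as [_ [_ [_ [h4 _]]]].
        destruct (Hn _ (HIQ n _ h4)) as [_ [[] _]]. }
    assert (Qcomp : compact OY Qinf).
    { intros F HF Hcov.
      destruct (WF (fun y => exists U, F U /\ U y)) as [n Hn].
      - apply Hu; auto.
      - auto.
      - destruct (HQc n F HF Hn) as [l [h1 h2]]. exists l; split; auto.
        intros y Hy. apply h2. apply Hy. }
    assert (Qsat : saturated OY Qinf).
    { intros y Hy n. apply HQs. intros U OU sub. apply Hy; auto.
      intros z Hz. apply sub. apply Hz. }
    exists (fun x0 => Qinf (proj1_sig (f x0))). split; [|split; [|split; [|split]]].
    + destruct Qne as [y Hy]. exists (g (exist G y (HQG y Hy))). rewrite fg. exact Hy.
    + apply (compact_transfer O OY G f g gf fg cg); auto.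
    + apply (saturated_transfer O OY G f cf); auto.
    + intros n x0 Hx0. rewrite alpha_mk. apply HQI. apply Hx0.
    + intros W' OW' sub.
      destruct (open_push O OY G g cg W' OW') as [V'' [OV'' HV'']].
      destruct (WF V'' OV'') as [n Hn].
      * intros y Hy. apply (HV'' (exist G y (HQG y Hy))). apply sub. simpl. rewrite fg. exact Hy.
      * exists n. intros x0 H0. rewrite alpha_mk in H0.
        rewrite <- (gf x0). apply (HV'' (f x0)). apply Hn. apply HIQ. exact H0.
Qed.

Theorem proposition9p1 :
  (forall (X : Type) (O : (X -> Prop) -> Prop),
     is_topology O -> domain_complete O -> convergence_choquet_complete O) /\
  (forall (X : Type) (O : (X -> Prop) -> Prop),
     is_topology O -> LCS_complete O -> compactly_choquet_complete O).
Proof.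
  split.
  - intros X O _ H. exact (part1 X O H).
  - intros X O _ H. exact (part2 X O H).
Qed.
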